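(* Let $n,k$ be integers with $2\le k\le n$, let $\varepsilon\in[0,1)$ and let $\gamma:=\frac{k(n-k)}{2n(n-1)}$. Let $\mathcal{I}=(I_1,\dots,I_m)$ be a finite sequence of $k$-element subsets of $[n]$ such that: (1) for every $i\in[n]$, the fraction $f_{ii}:=\frac{1}{m}|\{\ell\in[m]: i\in I_\ell\}|$ lies in $\left[\frac{k}{n}-\varepsilon\gamma,\frac{k}{n}+\varepsilon\gamma\right]$; (2) for every pair of distinct $i,j\in[n]$, the fraction $f_{ij}:=\frac{1}{m}|\{\ell\in[m]: \{i,j\}\subseteq I_\ell\}|$ lies in $\left[\frac{k(k-1)}{n(n-1)}-\varepsilon\gamma,\frac{k(k-1)}{n(n-1)}+\varepsilon\gamma\right]$. Then there is a scaling $\alpha>0$ such that for all matrices $M\in\mathbb{R}^{n\times n}$, $$\|M-\alpha\,T_{\mathcal{I}}(M)\|_F\le(1+\varepsilon)\frac{n-k}{n+k-2}\|M\|_F.$$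
   Context: For $M\in\mathbb{R}^{n\times n}$ and $I\subseteq[n]$, $M^I$ denotes the $n\times n$ matrix obtained from $M$ by setting to zero all entries outside rows and columns indexed by $I$ (i.e. $(M^I)_{ij}=M_{ij}$ if $i,j\in I$ and $0$ otherwise). The partial averaging operator is $T_{\mathcal{I}}(M):=\frac{1}{m}\sum_{\ell=1}^m M^{I_\ell}$ (the sum taken over the sequence, with multiplicity). $\|\cdot\|_F$ is the Frobenius norm. *)

(* Defs.v *)
From HB Require Import structures.
From mathcomp Require Import all_boot all_order all_algebra.
From mathcomp Require Import reals.
Set Implicit Arguments. Unset Strict Implicit. Unset Printing Implicit Defensive.
Import Order.TTheory GRing.Theory Num.Theory.
Local Open Scope ring_scope.

Definition restrmx (R : realType) (n : nat) (I : {set 'I_n}) (M : 'M[R]_n) : 'M[R]_n :=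
  \matrix_(i, j) (if (i \in I) && (j \in I) then M i j else 0).

Definition Tavg (R : realType) (n m : nat) (I : 'I_m -> {set 'I_n}) (M : 'M[R]_n)
  : 'M[R]_n := (m%:R)^-1 *: \sum_(l < m) restrmx (I l) M.

Definition frob (R : realType) (n : nat) (M : 'M[R]_n) : R :=
  Num.sqrt (\sum_(i < n) \sum_(j < n) M i j ^+ 2).

Definition fdiag (R : realType) (n m : nat) (I : 'I_m -> {set 'I_n}) (i : 'I_n) : R :=
  #|[set l : 'I_m | i \in I l]|%:R / m%:R.
Definition fpair (R : realType) (n m : nat) (I : 'I_m -> {set 'I_n}) (i j : 'I_n) : R :=
  #|[set l : 'I_m | (i \in I l) && (j \in I l)]|%:R / m%:R.

Definition gammak (R : realType) (n k : nat) : R :=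
  (k%:R * (n%:R - k%:R)) / (2 * n%:R * (n%:R - 1)).

(* Main.v *)
Require Import Defs.
From HB Require Import structures.
From mathcomp Require Import all_boot all_order all_algebra.
From mathcomp Require Import reals.
From mathcomp Require Import ring lra.
Import Order.TTheory GRing.Theory Num.Theory.
Local Open Scope ring_scope.

Lemma entryE (R : realType) (n m : nat) (I : 'I_m -> {set 'I_n}) (M : 'M[R]_n)
  (a : R) i j : (M - a *: Tavg I M) i j = (1 - a * fpair R I i j) * M i j.
Proof.
rewrite /Tavg !mxE summxE.
under eq_bigr => l _ do rewrite /restrmx mxE.
rewrite -big_mkcond /= sumr_const /fpair -mulr_natr.
have -> : #|[set l | (i \in I l) && (j \in I l)]| =
   #|(fun l => (i \in I l) && (j \in I l))| by apply: eq_card => l; rewrite inE.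
by rewrite mulrBl mul1r; ring.
Qed.

Lemma pointwise (R : realType) (N K eps f : R) (hK : 2 <= K) (hKN : K <= N)
  (he : 0 <= eps) :
  let p := K / N in let q := K * (K - 1) / (N * (N - 1)) in
  let g := (K * (N - K)) / (2 * N * (N - 1)) in
  let a := 2 / (p + q) in
  q - eps * g <= f -> f <= p + eps * g ->
  0 < a /\ `|1 - a * f| <= (1 + eps) * ((N - K) / (N + K - 2)).
Proof.
move=> p q g a hlo hhi.
have N0 : N != 0 by apply/eqP; lra.
have N1 : N - 1 != 0 by apply/eqP; lra.
have K0 : K != 0 by apply/eqP; lra.
have NK : N + K - 2 != 0 by apply/eqP; lra.
have Ha : a = 2 * N * (N - 1) / (K * (N + K - 2)).
  rewrite /a /p /q; field.
  apply/and3P; split => //.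
  have -> : K * (N - 1) + K * (K - 1) = K * (N + K - 2) by ring.
  by rewrite N1 N0 mulf_neq0.
have Hapos : 0 < a.
  rewrite Ha divr_gt0 // ?mulr_gt0 //; lra.
split => //.
have E1 : 1 - a * (q - eps * g) = (1 + eps) * ((N - K) / (N + K - 2)).
  rewrite Ha /q /g; field; by rewrite NK N1 N0 K0.
have E2 : 1 - a * (p + eps * g) = - ((1 + eps) * ((N - K) / (N + K - 2))).
  rewrite Ha /p /g; field; by rewrite NK N1 N0 K0.
rewrite ler_norml; apply/andP; split.
  rewrite -E2 lerD2l lerN2; apply: ler_wpM2l => //; exact: ltW.
rewrite -E1 lerD2l lerN2; apply: ler_wpM2l => //; exact: ltW.
Qed.

Theorem lemma8 (R : realType) (n k : nat) (hk2 : (2 <= k)%N) (hkn : (k <= n)%N)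
  (eps : R) (heps0 : 0 <= eps) (heps1 : eps < 1)
  (m : nat) (hm : (0 < m)%N) (I : 'I_m -> {set 'I_n})
  (hcard : forall l, #|I l| = k)
  (h1 : forall i : 'I_n,
     k%:R / n%:R - eps * gammak R n k <= fdiag R I i <= k%:R / n%:R + eps * gammak R n k)
  (h2 : forall i j : 'I_n, i != j ->
     (k%:R * (k%:R - 1)) / (n%:R * (n%:R - 1)) - eps * gammak R n k <= fpair R I i j
     <= (k%:R * (k%:R - 1)) / (n%:R * (n%:R - 1)) + eps * gammak R n k) :
  exists alpha : R, 0 < alpha /\
    forall M : 'M[R]_n,
      frob (M - alpha *: Tavg I M)
        <= (1 + eps) * ((n%:R - k%:R) / (n%:R + k%:R - 2)) * frob M.
Proof.
set N : R := n%:R; set K : R := k%:R.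
have hK : 2 <= K by rewrite /K (ler_nat R 2 k).
have hKN : K <= N by rewrite /K /N ler_nat.
set p := K / N; set q := K * (K - 1) / (N * (N - 1)).
set g := gammak R n k.
have hg : g = (K * (N - K)) / (2 * N * (N - 1)) by [].
have N0 : N != 0 by apply/eqP; lra.
have N1 : N - 1 != 0 by apply/eqP; lra.
have hqp : q <= p.
  have -> : p = q + K * (N - K) / (N * (N - 1)).
    rewrite /p /q; field; by apply/andP.
  rewrite lerDl divr_ge0 // ?mulr_ge0 //; lra.
have hf : forall i j, q - eps * g <= fpair R I i j <= p + eps * g.
  move=> i j; case: (eqVneq i j) => [<-|hij].
    have -> : fpair R I i i = fdiag R I i.
      by rewrite /fpair /fdiag; congr (_%:R / _); apply: eq_card => l; rewrite !inE andbb.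
    move: (h1 i); rewrite -/N -/K -/p -/g => /andP[a b]; apply/andP; split; lra.
  move: (h2 i j hij); rewrite -/N -/K -/q -/g => /andP[a b]; apply/andP; split; lra.
set a := 2 / (p + q).
have i0 : (0 < n)%N by apply: leq_trans hkn; exact: leq_trans _ hk2.
exists a; split.
  have := @pointwise R N K eps (fpair R I (Ordinal i0) (Ordinal i0)) hK hKN heps0.
  by rewrite -hg => /(_ (andP (hf _ _)).1 (andP (hf _ _)).2) [].
move=> M.
set B := (1 + eps) * ((N - K) / (N + K - 2)).
have hB : forall i j, `|1 - a * fpair R I i j| <= B.
  move=> i j; have := @pointwise R N K eps (fpair R I i j) hK hKN heps0.
  by rewrite -hg => /(_ (andP (hf _ _)).1 (andP (hf _ _)).2) [].
have B0 : 0 <= B.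
  have := hB (Ordinal i0) (Ordinal i0); apply: le_trans; exact: normr_ge0.
rewrite /frob -[B]ger0_norm // -sqrtr_sqr -sqrtrM ?sqr_ge0 //.
rewrite ler_sqrt; last by apply: mulr_ge0; [exact: sqr_ge0 | apply: sumr_ge0 => i _; apply: sumr_ge0 => j _; exact: sqr_ge0].
rewrite mulr_sumr; apply: ler_sum => i _.
rewrite mulr_sumr; apply: ler_sum => j _.
rewrite entryE exprMn ler_wpM2r ?sqr_ge0 //.
rewrite -real_normK ?num_real //.
by apply: lerXn2r; rewrite ?nnegrE ?normr_ge0.
Qed.
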